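(* Let $\theta(q,x):=\sum_{j=0}^{\infty}q^{j(j+1)/2}x^j$ and $w:=3/\sqrt{2}$. For all $(q,t)\in[0.75,1)\times[0,w]$, one has $\theta(q,-t+wi)\neq 0$. *)

(* Defs.v *)
From Stdlib Require Import Reals.
From Coquelicot Require Export Coquelicot.
Open Scope R_scope.

Definition theta_term (q : R) (x : C) (j : nat) : C :=
  Cmult (RtoC (q ^ (j * (j + 1) / 2)%nat)) (Cpow x j).

Definition theta (q : R) (x : C) : C :=
  (Series (fun j => Re (theta_term q x j)), Series (fun j => Im (theta_term q x j))).

Definition w : R := 3 / sqrt 2.

(* Main.v *)
Require Import Defs.
From Stdlib Require Import Reals Lra Lia Psatz.
From Coquelicot Require Import Coquelicot.
Open Scope R_scope.

Fixpoint csum (f : nat -> C) (n : nat) : C :=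
  match n with O => RtoC 0 | S m => Cplus (csum f m) (f m) end.
Fixpoint cprod (f : nat -> C) (n : nat) : C :=
  match n with O => RtoC 1 | S m => Cmult (cprod f m) (f m) end.
Fixpoint rsum (f : nat -> R) (n : nat) : R :=
  match n with O => 0 | S m => rsum f m + f m end.
Fixpoint rprod (f : nat -> R) (n : nat) : R :=
  match n with O => 1 | S m => rprod f m * f m end.

Lemma csum_ext f g n : (forall i, (i < n)%nat -> f i = g i) -> csum f n = csum g n.
Proof. induction n; intros H; simpl; auto. rewrite IHn by (intros; apply H; lia). rewrite (H n) by lia. auto. Qed.
Lemma cprod_ext f g n : (forall i, (i < n)%nat -> f i = g i) -> cprod f n = cprod g n.
Proof. induction n; intros H; simpl; auto. rewrite IHn by (intros; apply H; lia). rewrite (H n) by lia. auto. Qed.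
Lemma rsum_ext f g n : (forall i, (i < n)%nat -> f i = g i) -> rsum f n = rsum g n.
Proof. induction n; intros H; simpl; auto. rewrite IHn by (intros; apply H; lia). rewrite (H n) by lia. auto. Qed.
Lemma rprod_ext f g n : (forall i, (i < n)%nat -> f i = g i) -> rprod f n = rprod g n.
Proof. induction n; intros H; simpl; auto. rewrite IHn by (intros; apply H; lia). rewrite (H n) by lia. auto. Qed.

Lemma csum_shift f n : csum f (S n) = Cplus (f O) (csum (fun i => f (S i)) n).
Proof. induction n. simpl. ring. change (csum f (S (S n))) with (Cplus (csum f (S n)) (f (S n))).
  rewrite IHn. simpl. ring. Qed.
Lemma cprod_shift f n : cprod f (S n) = Cmult (f O) (cprod (fun i => f (S i)) n).
Proof. induction n. simpl. ring. change (cprod f (S (S n))) with (Cmult (cprod f (S n)) (f (S n))).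
  rewrite IHn. simpl. ring. Qed.
Lemma rprod_shift f n : rprod f (S n) = f O * rprod (fun i => f (S i)) n.
Proof. induction n. simpl. ring. change (rprod f (S (S n))) with (rprod f (S n) * f (S n)).
  rewrite IHn. simpl. ring. Qed.

Lemma csum_add f n m : csum f (n + m) = Cplus (csum f n) (csum (fun i => f (n + i)%nat) m).
Proof. induction m. simpl. rewrite Nat.add_0_r. ring. rewrite Nat.add_succ_r. simpl. rewrite IHm. ring. Qed.
Lemma cprod_add f n m : cprod f (n + m) = Cmult (cprod f n) (cprod (fun i => f (n + i)%nat) m).
Proof. induction m. simpl. rewrite Nat.add_0_r. ring. rewrite Nat.add_succ_r. simpl. rewrite IHm. ring. Qed.
Lemma rsum_add f n m : rsum f (n + m) = rsum f n + rsum (fun i => f (n + i)%nat) m.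
Proof. induction m. simpl. rewrite Nat.add_0_r. ring. rewrite Nat.add_succ_r. simpl. rewrite IHm. ring. Qed.
Lemma rprod_add f n m : rprod f (n + m) = rprod f n * rprod (fun i => f (n + i)%nat) m.
Proof. induction m. simpl. rewrite Nat.add_0_r. ring. rewrite Nat.add_succ_r. simpl. rewrite IHm. ring. Qed.

Lemma csum_plus f g n : csum (fun i => Cplus (f i) (g i)) n = Cplus (csum f n) (csum g n).
Proof. induction n; simpl. ring. rewrite IHn. ring. Qed.
Lemma csum_scal c f n : csum (fun i => Cmult c (f i)) n = Cmult c (csum f n).
Proof. induction n; simpl. ring. rewrite IHn. ring. Qed.
Lemma cprod_mult f g n : cprod (fun i => Cmult (f i) (g i)) n = Cmult (cprod f n) (cprod g n).
Proof. induction n; simpl. ring. rewrite IHn. ring. Qed.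
Lemma cprod_const c n : cprod (fun _ => c) n = Cpow c n.
Proof. induction n; simpl. auto. rewrite IHn. ring. Qed.
Lemma rprod_mult f g n : rprod (fun i => f i * g i) n = rprod f n * rprod g n.
Proof. induction n; simpl. ring. rewrite IHn. ring. Qed.

Lemma csum_rev f n : csum f n = csum (fun i => f (n - 1 - i)%nat) n.
Proof. induction n. auto. rewrite (csum_shift (fun i => f (S n - 1 - i)%nat)). simpl csum at 1. rewrite IHn.
  replace (S n - 1 - 0)%nat with n by lia.
  rewrite (csum_ext (fun i => f (n - 1 - i)%nat) (fun i => f (S n - 1 - S i)%nat)).
  ring. intros; f_equal; lia. Qed.
Lemma cprod_rev f n : cprod f n = cprod (fun i => f (n - 1 - i)%nat) n.
Proof. induction n. auto. rewrite (cprod_shift (fun i => f (S n - 1 - i)%nat)). simpl cprod at 1. rewrite IHn.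
  replace (S n - 1 - 0)%nat with n by lia.
  rewrite (cprod_ext (fun i => f (n - 1 - i)%nat) (fun i => f (S n - 1 - S i)%nat)).
  ring. intros; f_equal; lia. Qed.

Lemma Cmod_cprod f n : Cmod (cprod f n) = rprod (fun i => Cmod (f i)) n.
Proof. induction n; simpl. rewrite Cmod_1. auto. rewrite Cmod_mult, IHn. auto. Qed.
Lemma Cmod_csum f n : Cmod (csum f n) <= rsum (fun i => Cmod (f i)) n.
Proof. induction n; simpl. rewrite Cmod_0. lra. eapply Rle_trans. apply Cmod_triangle. lra. Qed.
Lemma rsum_le f g n : (forall i, (i < n)%nat -> f i <= g i) -> rsum f n <= rsum g n.
Proof. induction n; intros H; simpl. lra. assert (f n <= g n) by (apply H; lia).
  assert (rsum f n <= rsum g n) by (apply IHn; intros; apply H; lia). lra. Qed.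
Lemma rsum_nonneg f n : (forall i, (i < n)%nat -> 0 <= f i) -> 0 <= rsum f n.
Proof. intros H. replace 0 with (rsum (fun _ => 0) n). apply rsum_le; auto.
  clear H. induction n; simpl; auto. rewrite IHn. ring. Qed.
Lemma rprod_nonneg f n : (forall i, (i < n)%nat -> 0 <= f i) -> 0 <= rprod f n.
Proof. induction n; intros H; simpl. lra. apply Rmult_le_pos. apply IHn; intros; apply H; lia. apply H; lia. Qed.
Lemma rprod_le f g n : (forall i, (i < n)%nat -> 0 <= f i <= g i) -> rprod f n <= rprod g n.
Proof. induction n; intros H; simpl. lra. assert (0 <= f n <= g n) by (apply H; lia).
  assert (rprod f n <= rprod g n) by (apply IHn; intros; apply H; lia).
  assert (0 <= rprod f n) by (apply rprod_nonneg; intros; apply H; lia).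
  apply Rmult_le_compat; lra. Qed.
Lemma rprod_pos f n : (forall i, (i < n)%nat -> 0 < f i) -> 0 < rprod f n.
Proof. induction n; intros H; simpl. lra. apply Rmult_lt_0_compat. apply IHn; intros; apply H; lia. apply H; lia. Qed.
Lemma RtoC_rprod f n : RtoC (rprod f n) = cprod (fun i => RtoC (f i)) n.
Proof. induction n; simpl; auto. rewrite <- IHn. rewrite RtoC_mult. auto. Qed.


Fixpoint cb (n : nat) : nat := match n with O => O | S k => (cb k + k)%nat end.
Lemma cb_2 n : (2 * cb n + n = n * n)%nat.
Proof. induction n; simpl; nia. Qed.
Lemma cb_add a b : cb (a + b) = (cb a + a * b + cb b)%nat.
Proof. pose proof (cb_2 a). pose proof (cb_2 b). pose proof (cb_2 (a+b)). nia. Qed.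

Fixpoint qbin (q : R) (m i : nat) : R :=
  match m with
  | O => match i with O => 1 | S _ => 0 end
  | S m' => match i with O => 1 | S i' => qbin q m' (S i') + q ^ (m' - i') * qbin q m' i' end
  end.

Lemma qbin_0 q m : qbin q m 0 = 1.
Proof. destruct m; auto. Qed.
Lemma qbin_over q m i : (m < i)%nat -> qbin q m i = 0.
Proof. revert i; induction m; intros i H; destruct i; simpl; try lia; auto.
  rewrite !IHm by lia. ring. Qed.
Lemma qbin_mm q m : qbin q m m = 1.
Proof. induction m; simpl; auto. rewrite qbin_over by lia. rewrite Nat.sub_diag, IHm. ring. Qed.

Section QB.
Open Scope C_scope.
Lemma qbinom (q : R) (y : C) (m : nat) :
  cprod (fun k => y + RtoC (q ^ k)) m
  = csum (fun i => RtoC (qbin q m i * q ^ (cb i)) * y ^ (m - i)) (S m).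
Proof.
  induction m.
  - simpl. rewrite Rmult_1_l. ring.
  - change (cprod (fun k => y + RtoC (q ^ k)) (S m)) with
      (cprod (fun k => y + RtoC (q ^ k)) m * (y + RtoC (q ^ m))).
    rewrite IHm. clear IHm.
    rewrite (csum_shift _ (S m)).
    rewrite (csum_ext (fun i => RtoC (qbin q (S m) (S i) * q ^ cb (S i)) * y ^ (S m - S i))
       (fun i => RtoC (qbin q m (S i) * q ^ cb (S i)) * y ^ (m - i)
                 + RtoC (q ^ m) * (RtoC (qbin q m i * q ^ cb i) * y ^ (m - i)))).
    2:{ intros i Hi. simpl qbin. simpl cb.
        assert (E: ((qbin q m (S i) + q^(m-i)*qbin q m i) * q^(cb i + i))%R = (qbin q m (S i) * q^(cb i + i) + q^m * (qbin q m i * q^cb i))%R).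
        { rewrite pow_add. replace (q^m)%R with (q^(m-i)*q^i)%R by (rewrite <- pow_add; f_equal; lia). ring. }
        rewrite E. change (S m - S i)%nat with (m - i)%nat. rewrite !RtoC_plus, !RtoC_mult. ring. }
    rewrite csum_plus, csum_scal.
    assert (Hs : csum (fun i => RtoC (qbin q m i * q ^ cb i) * y ^ (m - i)) (S m) * y
       = RtoC (qbin q (S m) 0 * q ^ cb 0) * y ^ (S m - 0)
         + csum (fun i => RtoC (qbin q m (S i) * q ^ cb (S i)) * y ^ (m - i)) (S m)).
    { rewrite csum_shift. simpl csum at 2. rewrite qbin_over with (i := S m) by lia.
      rewrite !qbin_0. simpl cb. replace (S m - 0)%nat with (S m) by lia. replace (m - 0)%nat with m by lia.
      rewrite Cmult_plus_distr_r.
      rewrite (Cmult_comm (csum _ m) y), <- csum_scal.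
      rewrite (csum_ext _ (fun i => RtoC (qbin q m (S i) * q ^ (cb i + i)) * y ^ (m - i))).
      2:{ intros i Hi. replace (m - i)%nat with (S (m - S i)) by lia. simpl. ring. }
      rewrite Nat.sub_diag. simpl. rewrite !Rmult_0_l, !Rmult_1_l. rewrite Cmult_0_l. ring. }
    rewrite Cmult_plus_distr_l, Hs. ring.
Qed.
End QB.

Definition Pq (q : R) (n : nat) : R := rprod (fun k => 1 - q ^ (S k)) n.

Lemma Pq_pos q n : 0 < q < 1 -> 0 < Pq q n.
Proof. intros Hq. apply rprod_pos. intros i _. assert (q ^ S i < 1).
  { apply pow_lt_1_compat; lra || lia. } lra. Qed.

Lemma Pq_split q a b : Pq q (a + b) = Pq q a * rprod (fun k => 1 - q ^ (a + 1 + k)) b.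
Proof. unfold Pq. rewrite rprod_add. f_equal. apply rprod_ext. intros; f_equal; f_equal; lia. Qed.

Lemma qbin_closed q m i : (i <= m)%nat -> qbin q m i * Pq q i * Pq q (m - i) = Pq q m.
Proof.
  revert i; induction m; intros i Hi.
  - destruct i; [|lia]. simpl. unfold Pq; simpl. ring.
  - destruct i.
    + rewrite qbin_0. simpl (S m - 0)%nat. unfold Pq at 1. simpl. ring.
    + destruct (Nat.eq_dec i m) as [->|Hne].
      * rewrite qbin_mm, Nat.sub_diag. unfold Pq at 2. simpl. ring.
      * simpl qbin.
        pose proof (IHm (S i) ltac:(lia)) as H1.
        pose proof (IHm i ltac:(lia)) as H2.
        replace (S m - S i)%nat with (S (m - S i)) by lia.
        replace (m - i)%nat with (S (m - S i)) in H2 |- * by lia.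
        unfold Pq in *. simpl rprod in *.
        set (p := (m - S i)%nat) in *.
        assert (E : q * q ^ p * (q * q ^ i) = q * q ^ m).
        { change (q ^ S p * q ^ S i = q ^ S m). rewrite <- pow_add; f_equal; unfold p; lia. }
        change (q ^ S p) with (q * q ^ p).
        set (A := rprod (fun k => 1 - q * q ^ k) i) in *.
        set (B := rprod (fun k => 1 - q * q ^ k) p) in *.
        set (M := rprod (fun k => 1 - q * q ^ k) m) in *.
        transitivity (qbin q m (S i) * (A * (1 - q * q ^ i)) * B * (1 - q * q ^ p) + q * q ^ p * (qbin q m i * A * (B * (1 - q * q ^ p))) * (1 - q * q ^ i)).
        ring. rewrite H1, H2. rewrite <- E. ring.
Qed.

Definition V (q : R) (n j : nat) : R :=
  rprod (fun k => 1 - q ^ (n - j + 1 + k)) j * rprod (fun k => 1 - q ^ (n + j + 1 + k)) (n - j).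

Lemma qbin_V q n j : 0 < q < 1 -> (j <= n)%nat ->
  qbin q (2 * n) (n - j) * Pq q n = V q n j /\ qbin q (2 * n) (n + j) * Pq q n = V q n j.
Proof.
  intros Hq Hj.
  pose proof (qbin_closed q (2*n) (n - j) ltac:(lia)) as H1.
  pose proof (qbin_closed q (2*n) (n + j) ltac:(lia)) as H2.
  replace (2 * n - (n - j))%nat with (n + j)%nat in H1 by lia.
  replace (2 * n - (n + j))%nat with (n - j)%nat in H2 by lia.
  pose proof (Pq_split q (n + j) (n - j)) as S2. replace (n + j + (n - j))%nat with (2 * n)%nat in S2 by lia.
  pose proof (Pq_split q (n - j) j) as S1. replace (n - j + j)%nat with n in S1 by lia.
  pose proof (Pq_pos q (n + j) Hq). pose proof (Pq_pos q (n - j) Hq).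
  unfold V. rewrite S1.
  set (X := rprod _ j) in *. set (Y := rprod _ (n - j)) in *.
  set (a := Pq q (n - j)) in *. set (b := Pq q (n + j)) in *.
  rewrite S2 in H1, H2.
  split.
  - apply (Rmult_eq_reg_r (a * b)); [|nra].
    transitivity ((qbin q (2 * n) (n - j) * a * b) * (X * a)). ring. rewrite H1. ring.
  - apply (Rmult_eq_reg_r (a * b)); [|nra].
    transitivity ((qbin q (2 * n) (n + j) * b * a) * (X * a)). ring. rewrite H2. ring.
Qed.


Section MainId.
Open Scope C_scope.

Lemma Cpow_add' (z : C) a b : z ^ (a + b) = z ^ a * z ^ b.
Proof. induction a; simpl. ring. rewrite IHa. ring. Qed.
Lemma Cpow_mult' (z w : C) n : (z * w) ^ n = z ^ n * w ^ n.
Proof. induction n; simpl. ring. rewrite IHn. ring. Qed.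
Lemma Cpow_nz (z : C) n : z <> 0 -> z ^ n <> 0.
Proof. intros H. induction n; simpl. intro E. injection E. lra. 
  apply Cmult_neq_0; auto. Qed.
Lemma RtoC_nz (r : R) : r <> 0%R -> RtoC r <> 0.
Proof. intros H E. injection E. auto. Qed.
Lemma Cmult_cancel (a b c : C) : a <> 0 -> a * b = a * c -> b = c.
Proof. intros H E. transitivity (/ a * (a * b)). field; auto. rewrite E. field; auto. Qed.

Lemma cprod_qk (q : R) n : cprod (fun k => RtoC (q ^ k)) n = RtoC (q ^ cb n).
Proof. induction n; simpl. auto. rewrite IHn, <- RtoC_mult, <- pow_add. auto. Qed.

Variables (q : R) (x : C).
Hypothesis Hq : (0 < q < 1)%R.
Hypothesis Hx : x <> 0.

Definition Xp n := cprod (fun k => 1 + x * RtoC (q ^ (S k))) n.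
Definition Up n := cprod (fun k => 1 + / x * RtoC (q ^ k)) n.
Definition Pn n := RtoC (Pq q n) * Xp n * Up n.
Definition Pos n := csum (fun j => RtoC (V q n j * q ^ (cb (S j))) * x ^ j) (S n).
Definition Neg n := csum (fun m => RtoC (V q n (S m) * q ^ (cb (S m))) * (/ x) ^ (S m)) n.

Lemma main_identity n : Pos n + Neg n = Pn n.
Proof.
  set (y := x * RtoC (q ^ n)).
  assert (Hy : y <> 0).
  { unfold y. apply Cmult_neq_0; auto. apply RtoC_nz. assert (0 < q ^ n)%R by (apply pow_lt; lra). lra. }
  pose proof (qbinom q y (2 * n)) as H.
  assert (L : cprod (fun k => y + RtoC (q ^ k)) (2 * n) = RtoC (q ^ cb n) * y ^ n * Xp n * Up n).
  { replace (2 * n)%nat with (n + n)%nat by lia. rewrite cprod_add.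
    rewrite (cprod_ext _ (fun k => RtoC (q ^ k) * (1 + x * RtoC (q ^ (n - k))))).
    2:{ intros k Hk. unfold y. replace (q ^ n)%R with (q ^ k * q ^ (n - k))%R
          by (rewrite <- pow_add; f_equal; lia). rewrite RtoC_mult. ring. }
    rewrite cprod_mult, cprod_qk.
    rewrite (cprod_rev (fun k => 1 + x * RtoC (q ^ (n - k)))).
    rewrite (cprod_ext (fun k => 1 + x * RtoC (q ^ (n - (n - 1 - k)))) (fun k => 1 + x * RtoC (q ^ (S k)))).
    2:{ intros k Hk. replace (n - (n - 1 - k))%nat with (S k) by lia. reflexivity. }
    rewrite (cprod_ext (fun k => y + RtoC (q ^ (n + k))) (fun k => y * (1 + / x * RtoC (q ^ k)))).
    2:{ intros k Hk. unfold y. rewrite pow_add, RtoC_mult. field. auto. }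
    rewrite cprod_mult, cprod_const. unfold Xp, Up. ring. }
  assert (R : RtoC (Pq q n) * csum (fun i => RtoC (qbin q (2 * n) i * q ^ (cb i)) * y ^ (2 * n - i)) (S (2 * n))
              = RtoC (q ^ cb n) * y ^ n * (Pos n + Neg n)).
  { replace (S (2 * n)) with (S n + n)%nat by lia. rewrite csum_add.
    rewrite (csum_rev _ (S n)).
    rewrite Cmult_plus_distr_l, <- !csum_scal.
    unfold Pos, Neg. rewrite Cmult_plus_distr_l, <- !csum_scal.
    f_equal.
    - apply csum_ext. intros j Hj.
      replace (S n - 1 - j)%nat with (n - j)%nat by lia.
      replace (2 * n - (n - j))%nat with (n + j)%nat by lia.
      destruct (qbin_V q n j Hq ltac:(lia)) as [E1 _].
      rewrite Cpow_add'. unfold y at 2. rewrite Cpow_mult'.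
      transitivity (RtoC (qbin q (2 * n) (n - j) * Pq q n * q ^ cb (n - j) * (q ^ n) ^ j) * (y ^ n * x ^ j)).
      { rewrite !RtoC_mult, !RtoC_pow. ring. }
      rewrite E1.
      replace (V q n j * q ^ cb (n - j) * (q ^ n) ^ j)%R with (q ^ cb n * (V q n j * q ^ cb (S j)))%R.
      2:{ rewrite <- pow_mult.
          assert (cb (n - j) + n * j = cb n + cb (S j))%nat.
          { simpl. pose proof (cb_add (n - j) j) as H0. replace (n - j + j)%nat with n in H0 by lia. pose proof (cb_2 j). 
            assert (n = (n - j) + j)%nat by lia. set (p := (n - j)%nat) in *. rewrite H0. clearbody p. subst n. nia. }
          transitivity (V q n j * q ^ (cb n + cb (S j)))%R. rewrite pow_add; ring.
          rewrite <- H0, pow_add. ring. }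
      rewrite !RtoC_mult. ring.
    - apply csum_ext. intros m Hm.
      replace (2 * n - (S n + m))%nat with (n - S m)%nat by lia.
      destruct (qbin_V q n (S m) Hq ltac:(lia)) as [_ E2].
      replace (S n + m)%nat with (n + S m)%nat by lia.
      replace (y ^ n) with (y ^ (n - S m) * y ^ (S m)) by (rewrite <- Cpow_add'; f_equal; lia).
      transitivity (RtoC (qbin q (2 * n) (n + S m) * Pq q n * q ^ cb (n + S m)) * y ^ (n - S m)).
      { rewrite !RtoC_mult. ring. }
      rewrite E2. rewrite cb_add, !pow_add.
      assert (Yu : y ^ S m * (/ x) ^ S m = RtoC ((q ^ n) ^ S m)).
      { rewrite <- Cpow_mult', RtoC_pow. f_equal. unfold y. field. auto. }
      transitivity (RtoC (q ^ cb n * (V q n (S m) * q ^ cb (S m))) * y ^ (n - S m) * (y ^ S m * (/ x) ^ S m)).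
      2:{ rewrite !RtoC_mult. ring. }
      rewrite Yu. rewrite <- pow_mult. rewrite !RtoC_mult. ring. }
  assert (Hn : RtoC (q ^ cb n) * y ^ n <> 0).
  { apply Cmult_neq_0. apply RtoC_nz. assert (0 < q ^ cb n)%R by (apply pow_lt; lra). lra.
    apply (Cpow_nz y n Hy). }
  apply (Cmult_cancel (RtoC (q ^ cb n) * y ^ n)); auto.
  rewrite <- R, <- H, L. unfold Pn. ring.
Qed.
End MainId.


Definition h (s : R) := (1-s)^2*((1+s^2)^2 + 32/9*s^2).
Lemma h1 s : 0 <= s <= 1 -> h s <= 1.
Proof. intros [H1 H2]. unfold h. assert (0 <= s*(1-s)) by nra. nra. Qed.

Definition AR (k : nat) : R := match k with 0 => 3/4 | 1 => 281/500 | 2 => 421/1000 | 3 => 79/250 | 4 => 237/1000 | 5 => 177/1000 | 6 => 133/1000 | 7 => 1/10 | 8 => 3/40 | 9 => 563/10000 | 10 => 211/5000 | 11 => 79/2500 | _ => 0 end.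
Definition DD (k : nat) : R := match k with 0 => 279/1000 | 1 => 549/1000 | 2 => 677/1000 | 3 => 367/500 | 4 => 767/1000 | 5 => 797/1000 | 6 => 827/1000 | 7 => 857/1000 | 8 => 221/250 | 9 => 227/250 | 10 => 116/125 | 11 => 189/200 | _ => 1 end.
Lemma hb0 s : 3/4 <= s <= 1 -> h s <= 279/1000.
Proof. intros [H1 H2]. unfold h. assert (0 <= (s - 3/4)*(1-s)) by nra. assert (0 <= s) by lra. nra. Qed.
Lemma hb1 s : 281/500 <= s <= 1 -> h s <= 549/1000.
Proof. intros [H1 H2]. unfold h. assert (0 <= (s - 281/500)*(1-s)) by nra. assert (0 <= s) by lra. nra. Qed.
Lemma hb2 s : 421/1000 <= s <= 1 -> h s <= 677/1000.
Proof. intros [H1 H2]. unfold h. assert (0 <= (s - 421/1000)*(1-s)) by nra. assert (0 <= s) by lra. nra. Qed.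
Lemma hb3 s : 79/250 <= s <= 1 -> h s <= 367/500.
Proof. intros [H1 H2]. unfold h. assert (0 <= (s - 79/250)*(1-s)) by nra. assert (0 <= s) by lra. nra. Qed.
Lemma hb4 s : 237/1000 <= s <= 1 -> h s <= 767/1000.
Proof. intros [H1 H2]. unfold h. assert (0 <= (s - 237/1000)*(1-s)) by nra. assert (0 <= s) by lra. nra. Qed.
Lemma hb5 s : 177/1000 <= s <= 1 -> h s <= 797/1000.
Proof. intros [H1 H2]. unfold h. assert (0 <= (s - 177/1000)*(1-s)) by nra. assert (0 <= s) by lra. nra. Qed.
Lemma hb6 s : 133/1000 <= s <= 1 -> h s <= 827/1000.
Proof. intros [H1 H2]. unfold h. assert (0 <= (s - 133/1000)*(1-s)) by nra. assert (0 <= s) by lra. nra. Qed.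
Lemma hb7 s : 1/10 <= s <= 1 -> h s <= 857/1000.
Proof. intros [H1 H2]. unfold h. assert (0 <= (s - 1/10)*(1-s)) by nra. assert (0 <= s) by lra. nra. Qed.
Lemma hb8 s : 3/40 <= s <= 1 -> h s <= 221/250.
Proof. intros [H1 H2]. unfold h. assert (0 <= (s - 3/40)*(1-s)) by nra. assert (0 <= s) by lra. nra. Qed.
Lemma hb9 s : 563/10000 <= s <= 1 -> h s <= 227/250.
Proof. intros [H1 H2]. unfold h. assert (0 <= (s - 563/10000)*(1-s)) by nra. assert (0 <= s) by lra. nra. Qed.
Lemma hb10 s : 211/5000 <= s <= 1 -> h s <= 116/125.
Proof. intros [H1 H2]. unfold h. assert (0 <= (s - 211/5000)*(1-s)) by nra. assert (0 <= s) by lra. nra. Qed.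
Lemma hb11 s : 79/2500 <= s <= 1 -> h s <= 189/200.
Proof. intros [H1 H2]. unfold h. assert (0 <= (s - 79/2500)*(1-s)) by nra. assert (0 <= s) by lra. nra. Qed.
Lemma hD k s : AR k <= s <= 1 -> 0 <= s -> h s <= DD k.
Proof. intros H H0.
  destruct k as [|k]; [apply hb0; exact H|].
  destruct k as [|k]; [apply hb1; exact H|].
  destruct k as [|k]; [apply hb2; exact H|].
  destruct k as [|k]; [apply hb3; exact H|].
  destruct k as [|k]; [apply hb4; exact H|].
  destruct k as [|k]; [apply hb5; exact H|].
  destruct k as [|k]; [apply hb6; exact H|].
  destruct k as [|k]; [apply hb7; exact H|].
  destruct k as [|k]; [apply hb8; exact H|].
  destruct k as [|k]; [apply hb9; exact H|].
  destruct k as [|k]; [apply hb10; exact H|].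
  destruct k as [|k]; [apply hb11; exact H|].
  simpl. apply h1; lra. Qed.
Lemma AR_le k : AR k <= (3/4) ^ (S k).
Proof. do 12 (destruct k as [|k]; [simpl; lra|]). simpl AR. apply pow_le. lra. Qed.
Lemma DD_nonneg k : 0 <= DD k.
Proof. do 12 (destruct k as [|k]; [simpl; lra|]). simpl. lra. Qed.
Lemma DD_prod : rprod DD 12 <= 16/625.
Proof. simpl. lra. Qed.
Lemma DD_tail m : (12 <= m)%nat -> rprod DD m = rprod DD 12.
Proof. intros Hm. replace m with (12 + (m - 12))%nat by lia. rewrite rprod_add.
  rewrite (rprod_ext (fun i => DD (12 + i)) (fun _ => 1)). 2:{ intros i _. reflexivity. }
  assert (forall p, rprod (fun _ => 1) p = 1) as E by (induction p; simpl; [|rewrite IHp]; ring).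
  rewrite E. ring. Qed.

Lemma w_sq : w ^ 2 = 9/2.
Proof. unfold w. assert (H : sqrt 2 * sqrt 2 = 2) by (apply sqrt_sqrt; lra).
  assert (0 < sqrt 2) by (apply sqrt_lt_R0; lra).
  simpl. replace (3 / sqrt 2 * (3 / sqrt 2 * 1)) with (9 / (sqrt 2 * sqrt 2)) by (field; lra).
  rewrite H. field. Qed.
Lemma w_pos : 0 < w.
Proof. unfold w. assert (0 < sqrt 2) by (apply sqrt_lt_R0; lra). apply Rdiv_lt_0_compat; lra. Qed.
Lemma w_bnd : 212/100 <= w <= 213/100.
Proof. pose proof w_sq. pose proof w_pos. split; nra. Qed.

Lemma poly_key s t W : W = 9/2 -> 0 <= s <= 1 -> 0 <= t -> t^2 <= 9/2 ->
  ((1-s*t)^2 + s^2 * W) * ((s-t)^2 + W) <= ((1+s^2)^2 + 32/9*s^2) * (t^2 + W).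
Proof.
  intros HW [Hs0 Hs1] Ht0 Ht2.
  assert (Ht : t <= 213/100) by nra.
  set (R := t^2 + W).
  assert (HR1 : 9/2 <= R) by (unfold R; nra).
  assert (HR2 : R <= 9) by (unfold R; lra).
  assert (Id : ((1-s*t)^2 + s^2 * W) * ((s-t)^2 + W) * R =
               (R*(1+s^2) - s*t*(R+1))^2 + s^2*W*(R-1)^2) by (unfold R; ring).
  assert (X0 : 0 <= s*t*(R+1)) by (apply Rmult_le_pos; [apply Rmult_le_pos|]; lra).
  assert (X1 : s*t*(R+1) <= 2*R*(1+s^2)).
  { assert (s*t <= s*(213/100)) by (apply Rmult_le_compat_l; lra).
    assert (R + 1 <= 11/9*R) by lra.
    assert (s*t*(R+1) <= s*(213/100)*(11/9*R)) by (apply Rmult_le_compat; nra).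
    nra. }
  assert (B1 : (R*(1+s^2) - s*t*(R+1))^2 <= (R*(1+s^2))^2) by nra.
  assert (B2 : s^2*W*(R-1)^2 <= 32/9*s^2*R^2).
  { assert ((R-1)^2 <= 64/81*R^2) by nra. subst W. nra. }
  assert (HRp : 0 < R) by lra.
  apply (Rmult_le_reg_r R); auto. rewrite Id. nra.
Qed.

Definition xx (t : R) : C := ((-t)%R, w).
Lemma xx_nz t : xx t <> RtoC 0.
Proof. intro E. injection E. intros. pose proof w_pos. lra. Qed.
Lemma Cmod_sq z : Cmod z ^ 2 = fst z ^ 2 + snd z ^ 2.
Proof. unfold Cmod. rewrite pow2_sqrt. auto. pose proof (pow2_ge_0 (fst z)). pose proof (pow2_ge_0 (snd z)). lra. Qed.

Lemma mod1xs t s : Cmod (Cplus (RtoC 1) (Cmult (xx t) (RtoC s))) ^ 2 = (1 - s*t)^2 + (s*w)^2.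
Proof. rewrite Cmod_sq. unfold xx. simpl. ring. Qed.
Lemma modxs t s : Cmod (Cplus (xx t) (RtoC s)) ^ 2 = (s - t)^2 + w^2.
Proof. rewrite Cmod_sq. unfold xx. simpl. ring. Qed.
Lemma modx t : Cmod (xx t) ^ 2 = t^2 + w^2.
Proof. rewrite Cmod_sq. unfold xx. simpl. ring. Qed.
Lemma mod1us t s : Cmod (Cplus (RtoC 1) (Cmult (Cinv (xx t)) (RtoC s))) = Cmod (Cplus (xx t) (RtoC s)) / Cmod (xx t).
Proof. pose proof (xx_nz t). replace (Cplus (RtoC 1) (Cmult (Cinv (xx t)) (RtoC s))) with (Cdiv (Cplus (xx t) (RtoC s)) (xx t)).
  apply Cmod_div; auto. field. auto. Qed.

Lemma g_bound t s : 0 <= s <= 1 -> 0 <= t -> t^2 <= 9/2 ->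
  ((1-s) * Cmod (Cplus (RtoC 1) (Cmult (xx t) (RtoC s))) * Cmod (Cplus (RtoC 1) (Cmult (Cinv (xx t)) (RtoC s))))^2 <= h s.
Proof.
  intros Hs Ht0 Ht2. rewrite mod1us.
  pose proof (mod1xs t s) as A2. pose proof (modxs t s) as B2. pose proof (modx t) as R2.
  set (A := Cmod (Cplus (RtoC 1) (Cmult (xx t) (RtoC s)))) in *.
  set (B := Cmod (Cplus (xx t) (RtoC s))) in *.
  set (r := Cmod (xx t)) in *.
  assert (Hr : 0 < r). { apply Cmod_gt_0. apply xx_nz. }
  assert (0 < r^2) by nra.
  replace (((1-s) * A * (B / r))^2) with ((1-s)^2 * A^2 * B^2 / r^2) by (field; lra).
  unfold Rdiv. apply (Rmult_le_reg_r (r^2)); auto.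
  replace ((1-s)^2 * A^2 * B^2 * / r^2 * r^2) with ((1-s)^2 * (A^2 * B^2)) by (field; lra).
  rewrite A2, B2, R2. pose proof w_sq.
  pose proof (poly_key s t (w^2) H0 Hs Ht0 Ht2) as K.
  replace (s ^ 2 * w ^ 2) with ((s*w)^2) in K by ring.
  unfold h. assert (0 <= (1-s)^2) by apply pow2_ge_0.
  replace ((1 - s) ^ 2 * ((1 + s ^ 2) ^ 2 + 32 / 9 * s ^ 2) * (t ^ 2 + w ^ 2)) with ((1 - s) ^ 2 * (((1 + s ^ 2) ^ 2 + 32 / 9 * s ^ 2) * (t ^ 2 + w ^ 2))) by ring.
  apply Rmult_le_compat_l; auto.
Qed.

Lemma l3 s : 0 <= s <= 1 -> (1-s)^2*(1+9*s^2) <= 1.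
Proof. intros [H1 H2]. 
  assert (0 <= 2 - 10*s + 18*s^2 - 9*s^3).
  { assert (0 <= (1-s)*(s-2/5)^2) by (apply Rmult_le_pos; [lra| apply pow2_ge_0]). assert (0 <= (s-17/45)^2) by apply pow2_ge_0. nra. }
  assert (0 <= s * (2 - 10*s + 18*s^2 - 9*s^3)) by (apply Rmult_le_pos; lra).
  replace ((1-s)^2*(1+9*s^2)) with (1 - s * (2 - 10*s + 18*s^2 - 9*s^3)) by ring. lra. Qed.

Lemma last_bound t s : 0 <= s <= 1 -> 0 <= t -> t^2 <= 9/2 ->
  (1-s) * Cmod (Cplus (RtoC 1) (Cmult (xx t) (RtoC s))) <= 1.
Proof.
  intros Hs Ht0 Ht2. pose proof (mod1xs t s) as A2. pose proof w_sq.
  set (A := Cmod (Cplus (RtoC 1) (Cmult (xx t) (RtoC s)))) in *.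
  assert (0 <= A) by apply Cmod_ge_0.
  assert (((1-s)*A)^2 <= 1).
  { replace (((1-s)*A)^2) with ((1-s)^2 * A^2) by ring. rewrite A2.
    assert ((1 - s*t)^2 + (s*w)^2 <= 1 + 9*s^2).
    { replace ((1 - s*t)^2 + (s*w)^2) with (1 - 2*s*t + s^2*(t^2 + w^2)) by ring.
      assert (0 <= s*t) by (apply Rmult_le_pos; lra). nra. }
    pose proof (l3 s Hs). assert (0 <= (1-s)^2) by apply pow2_ge_0. nra. }
  assert (0 <= (1-s)*A) by (apply Rmult_le_pos; lra). nra.
Qed.


Lemma prod_rearr (pk Af Bk : nat -> R) m :
  rprod pk (S m) * rprod Af (S m) * rprod Bk (S m)
  = Bk O * rprod (fun k => pk k * Af k * Bk (S k)) m * (pk m * Af m).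
Proof.
  induction m.
  - simpl. ring.
  - change (rprod pk (S (S m))) with (rprod pk (S m) * pk (S m)).
    change (rprod Af (S (S m))) with (rprod Af (S m) * Af (S m)).
    change (rprod Bk (S (S m))) with (rprod Bk (S m) * Bk (S m)).
    transitivity (rprod pk (S m) * rprod Af (S m) * rprod Bk (S m) * (pk (S m) * Af (S m) * Bk (S m))). ring.
    rewrite IHm. simpl. ring.
Qed.

Lemma rprod_sq f m : rprod (fun k => f k ^ 2) m = (rprod f m) ^ 2.
Proof. induction m; [simpl; ring|]. change (rprod (fun k => f k ^ 2) (S m)) with (rprod (fun k => f k ^ 2) m * f m ^ 2).
  rewrite IHm. simpl. ring. Qed.

Lemma pow_le1 q n : 0 <= q <= 1 -> q ^ n <= 1.
Proof. intros Hq. rewrite <- (pow1 n). apply pow_incr. lra. Qed.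

Lemma s_bounds q k : 3/4 <= q < 1 -> AR k <= q ^ (S k) <= 1 /\ 0 <= q ^ (S k).
Proof. intros Hq. split; [split|].
  - eapply Rle_trans. apply AR_le. apply pow_incr. lra.
  - apply pow_le1; lra.
  - apply pow_le; lra.
Qed.

Lemma UB q t n : 3/4 <= q < 1 -> 0 <= t -> t^2 <= 9/2 -> (13 <= n)%nat ->
  Cmod (Pn q (xx t) n) <= Cmod (Cplus (RtoC 1) (Cmult (Cinv (xx t)) (RtoC (q ^ 0)))) * (4/25).
Proof.
  intros Hq Ht0 Ht2 Hn.
  unfold Pn, Xp, Up. rewrite !Cmod_mult, Cmod_R, !Cmod_cprod.
  assert (HPq : 0 < Pq q n) by (apply Pq_pos; lra).
  rewrite Rabs_pos_eq by lra. unfold Pq.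
  destruct n as [|m]; [lia|].
  rewrite prod_rearr.
  set (g := fun k => (1 - q ^ S k) * Cmod (Cplus (RtoC 1) (Cmult (xx t) (RtoC (q ^ S k)))) *
                     Cmod (Cplus (RtoC 1) (Cmult (Cinv (xx t)) (RtoC (q ^ S k))))).
  change (rprod _ m) with (rprod g m).
  assert (Hg : forall k, 0 <= g k /\ g k ^ 2 <= DD k /\ g k <= 1).
  { intros k. destruct (s_bounds q k Hq) as [[H1 H2] H3].
    assert (G0 : 0 <= g k).
    { unfold g. apply Rmult_le_pos; [apply Rmult_le_pos|]; try apply Cmod_ge_0; lra. }
    assert (G1 : g k ^ 2 <= h (q ^ S k)) by (apply g_bound; auto; lra).
    split; auto. split. eapply Rle_trans; [exact G1|]. apply hD; lra.
    assert (h (q ^ S k) <= 1) by (apply h1; lra). nra. }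
  assert (Hprod : rprod g m <= 4/25).
  { assert (0 <= rprod g m) by (apply rprod_nonneg; intros; apply Hg).
    assert (rprod g m ^ 2 <= 16/625).
    { rewrite <- rprod_sq. eapply Rle_trans. apply (rprod_le _ DD).
      intros i _. split. apply pow2_ge_0. apply Hg.
      rewrite DD_tail by lia. apply DD_prod. }
    nra. }
  assert (Hlast : 0 <= (1 - q ^ S m) * Cmod (Cplus (RtoC 1) (Cmult (xx t) (RtoC (q ^ S m)))) <= 1).
  { destruct (s_bounds q m Hq) as [[H1 H2] H3]. split.
    apply Rmult_le_pos; [lra| apply Cmod_ge_0].
    apply last_bound; auto; lra. }
  set (B0 := Cmod (Cplus (RtoC 1) (Cmult (Cinv (xx t)) (RtoC (q ^ 0))))).
  assert (0 <= B0) by apply Cmod_ge_0.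
  assert (0 <= rprod g m) by (apply rprod_nonneg; intros; apply Hg).
  apply Rmult_le_compat_l with (r := B0) in Hprod; auto.
  destruct Hlast as [L0 L1].
  apply Rle_trans with (B0 * rprod g m * 1). apply Rmult_le_compat_l; auto. apply Rmult_le_pos; auto. lra.
Qed.


Lemma rsum_scal a f n : rsum (fun j => a * f j) n = a * rsum f n.
Proof. induction n; simpl. ring. rewrite IHn. ring. Qed.
Lemma rsum_mono_n f L M : (forall j, 0 <= f j) -> (L <= M)%nat -> rsum f L <= rsum f M.
Proof. intros Hf HLM. replace M with (L + (M - L))%nat by lia. rewrite rsum_add.
  assert (0 <= rsum (fun i => f (L + i)%nat) (M - L)) by (apply rsum_nonneg; auto). lra. Qed.
Lemma pow_decr q a b : 0 <= q <= 1 -> (a <= b)%nat -> q ^ b <= q ^ a.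
Proof. intros Hq Hab. replace b with (a + (b - a))%nat by lia. rewrite pow_add.
  assert (q ^ (b - a) <= 1) by (apply pow_le1; lra). assert (0 <= q ^ a) by (apply pow_le; lra). nra. Qed.
Lemma geom_sum r p : 0 <= r < 1 -> rsum (fun m => r ^ m) p * (1 - r) = 1 - r ^ p.
Proof. intros Hr. induction p; simpl. ring. rewrite Rmult_plus_distr_r, IHp. ring. Qed.
Lemma geom_le r p : 0 <= r < 1 -> rsum (fun m => r ^ m) p <= / (1 - r).
Proof. intros Hr. pose proof (geom_sum r p Hr). assert (0 <= r ^ p) by (apply pow_le; lra).
  apply (Rmult_le_reg_r (1 - r)). lra. rewrite H. rewrite Rinv_l; lra. Qed.
Lemma pow_small q y : 0 <= q < 1 -> 0 < y -> exists N, forall n, (N <= n)%nat -> q ^ n < y.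
Proof. intros Hq Hy. destruct (pow_lt_1_zero q ltac:(rewrite Rabs_pos_eq; lra) y Hy) as [N HN].
  exists N. intros n Hn. specialize (HN n ltac:(lia)). rewrite Rabs_pos_eq in HN; auto. apply pow_le; lra. Qed.

Lemma tail_lemma (c : nat -> R) J M : (forall j, 0 <= c j) -> (forall j, (J <= j)%nat -> c (S j) <= c j / 2) ->
  (J <= M)%nat -> forall p, rsum (fun i => c (M + i)%nat) p <= 2 * c M - 2 * c (M + p)%nat.
Proof. intros Hc Hd HM p. induction p; simpl. rewrite Nat.add_0_r. lra.
  pose proof (Hd (M + p)%nat ltac:(lia)). rewrite Nat.add_succ_r. lra. Qed.

Lemma decay (c : nat -> R) J : (forall j, 0 <= c j) -> (forall j, (J <= j)%nat -> c (S j) <= c j / 2) ->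
  forall k, c (J + k)%nat <= c J * (1/2) ^ k.
Proof. intros Hc Hd k. induction k. simpl. rewrite Nat.add_0_r. lra.
  rewrite Nat.add_succ_r. pose proof (Hd (J + k)%nat ltac:(lia)). simpl. lra. Qed.

Lemma tannery (q K0 : R) (c : nat -> R) (J : nat) :
  0 <= q < 1 -> 0 <= K0 -> (forall j, 0 <= c j) -> (forall j, (J <= j)%nat -> c (S j) <= c j / 2) ->
  forall eps, 0 < eps -> exists N, forall n L (e : nat -> R), (N <= n)%nat -> (L <= S n)%nat ->
    (forall j, (j < L)%nat -> 0 <= e j <= 1 /\ e j <= K0 * q ^ (n - j)) ->
    rsum (fun j => e j * c j) L <= eps.
Proof.
  intros Hq HK Hc Hd eps Heps.
  destruct (pow_small (1/2) (eps / (4 * (c J + 1))) ltac:(lra)) as [k Hk].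
  { apply Rdiv_lt_0_compat; auto. pose proof (Hc J). lra. }
  set (M := (J + k)%nat).
  assert (HcM : 2 * c M <= eps / 2).
  { pose proof (decay c J Hc Hd k). specialize (Hk k (le_n k)). pose proof (Hc J).
    assert (c J * (1/2)^k <= c J * (eps / (4 * (c J + 1)))) by (apply Rmult_le_compat_l; lra).
    assert (c J * (eps / (4 * (c J + 1))) <= eps / 4).
    { unfold Rdiv. apply (Rmult_le_reg_r (4 * (c J + 1))). lra.
      replace (c J * (eps * / (4 * (c J + 1))) * (4 * (c J + 1))) with (c J * eps) by (field; lra).
      replace (eps * / 4 * (4 * (c J + 1))) with (eps * c J + eps) by (field; lra). nra. }
    fold M in H. lra. }
  set (S0 := rsum c M).
  assert (HS0 : 0 <= S0) by (apply rsum_nonneg; auto).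
  destruct (pow_small q (eps / (2 * (K0 * S0 + 1))) Hq) as [k2 Hk2].
  { apply Rdiv_lt_0_compat; auto. nra. }
  exists (M + k2)%nat. intros n L e Hn HL He.
  assert (Hqn : K0 * q ^ (n - M) * S0 <= eps / 2).
  { specialize (Hk2 (n - M)%nat ltac:(lia)).
    assert (0 <= q ^ (n - M)) by (apply pow_le; lra).
    assert (K0 * S0 * q ^ (n - M) <= K0 * S0 * (eps / (2 * (K0 * S0 + 1)))).
    { apply Rmult_le_compat_l; nra. }
    assert (K0 * S0 * (eps / (2 * (K0 * S0 + 1))) <= eps / 2).
    { unfold Rdiv. apply (Rmult_le_reg_r (2 * (K0 * S0 + 1))). nra.
      replace (K0 * S0 * (eps * / (2 * (K0 * S0 + 1))) * (2 * (K0 * S0 + 1))) with (K0 * S0 * eps) by (field; nra).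
      replace (eps * / 2 * (2 * (K0 * S0 + 1))) with (eps * (K0 * S0) + eps) by (field; nra). nra. }
    nra. }
  assert (Hfirst : forall L', (L' <= M)%nat -> (L' <= L)%nat -> rsum (fun j => e j * c j) L' <= K0 * q ^ (n - M) * S0).
  { intros L' HL'M HL'L.
    apply Rle_trans with (rsum (fun j => K0 * q ^ (n - M) * c j) L').
    apply rsum_le. intros j Hj. destruct (He j ltac:(lia)) as [[E0 E1] E2].
    apply Rmult_le_compat_r; auto. eapply Rle_trans; [exact E2|]. apply Rmult_le_compat_l; auto.
    apply pow_decr; lia || lra.
    rewrite rsum_scal. apply Rmult_le_compat_l. apply Rmult_le_pos; auto. apply pow_le; lra.
    apply rsum_mono_n; auto. }
  destruct (Compare_dec.le_lt_dec L M) as [HLM|HLM].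
  - pose proof (Hfirst L HLM (le_n L)). lra.
  - replace L with (M + (L - M))%nat by lia. rewrite rsum_add.
    pose proof (Hfirst M (le_n M) ltac:(lia)).
    assert (rsum (fun i => e (M + i)%nat * c (M + i)%nat) (L - M) <= rsum (fun i => c (M + i)%nat) (L - M)).
    { apply rsum_le. intros i Hi. destruct (He (M + i)%nat ltac:(lia)) as [[E0 E1] E2].
      pose proof (Hc (M + i)%nat). nra. }
    pose proof (tail_lemma c J M Hc Hd ltac:(unfold M; lia) (L - M)).
    pose proof (Hc (M + (L - M))%nat). lra.
Qed.


Lemma weier (y : nat -> R) b : (forall k, (k < b)%nat -> 0 <= y k <= 1) ->
  0 <= rprod (fun k => 1 - y k) b <= 1 /\ 1 - rprod (fun k => 1 - y k) b <= rsum y b.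
Proof. induction b; intros H; simpl. lra.
  destruct IHb as [[P0 P1] P2]. intros; apply H; lia.
  pose proof (H b ltac:(lia)). split. split. apply Rmult_le_pos; lra. nra. nra. Qed.

Lemma geo_shift q a b : 0 <= q < 1 -> rsum (fun k => q ^ (a + k)) b <= q ^ a / (1 - q).
Proof. intros Hq. rewrite (rsum_ext _ (fun k => q ^ a * q ^ k)) by (intros; apply pow_add).
  rewrite rsum_scal. unfold Rdiv. apply Rmult_le_compat_l. apply pow_le; lra. apply geom_le; lra. Qed.

Lemma V_bounds q n j : 0 < q < 1 -> (j <= n)%nat ->
  0 <= V q n j <= 1 /\ 1 - V q n j <= 2 / (1 - q) * q ^ (n - j).
Proof.
  intros Hq Hj. unfold V.
  assert (Y : forall a k, 0 <= q ^ (a + k) <= 1) by (intros; split; [apply pow_le| apply pow_le1]; lra).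
  destruct (weier (fun k => q ^ (n - j + 1 + k)) j) as [[A0 A1] A2]. intros; apply Y.
  destruct (weier (fun k => q ^ (n + j + 1 + k)) (n - j)) as [[B0 B1] B2]. intros; apply Y.
  pose proof (geo_shift q (n - j + 1) j ltac:(lra)).
  pose proof (geo_shift q (n + j + 1) (n - j) ltac:(lra)).
  assert (q ^ (n - j + 1) <= q ^ (n - j)) by (apply pow_decr; lia || lra).
  assert (q ^ (n + j + 1) <= q ^ (n - j)) by (apply pow_decr; lia || lra).
  assert (0 < 1 - q) by lra.
  assert (q ^ (n - j + 1) / (1 - q) <= q ^ (n - j) / (1 - q)) by (apply Rmult_le_compat_r; [apply Rlt_le, Rinv_0_lt_compat|]; lra).
  assert (q ^ (n + j + 1) / (1 - q) <= q ^ (n - j) / (1 - q)) by (apply Rmult_le_compat_r; [apply Rlt_le, Rinv_0_lt_compat|]; lra).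
  set (P1 := rprod _ j) in *. set (P2 := rprod _ (n - j)) in *.
  replace (2 / (1 - q) * q ^ (n - j)) with (q ^ (n - j) / (1 - q) + q ^ (n - j) / (1 - q)) by (field; lra).
  split. split. apply Rmult_le_pos; lra. nra. nra.
Qed.

Lemma Cmod_csum_diff f g N : Cmod (Cminus (csum f N) (csum g N)) <= rsum (fun i => Cmod (Cminus (f i) (g i))) N.
Proof. replace (Cminus (csum f N) (csum g N)) with (csum (fun i => Cminus (f i) (g i)) N).
  apply Cmod_csum. induction N; simpl. ring. rewrite IHN. ring. Qed.

Definition Ssum q x N := csum (fun j => Cmult (RtoC (q ^ cb (S j))) (Cpow x j)) N.
Definition Gs q x n := csum (fun m => Cmult (RtoC (q ^ cb (S m))) (Cpow (Cinv x) (S m))) n.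

Lemma Cmod_term_diff (v a : R) (z : C) k : 0 <= v <= 1 -> 0 <= a ->
  Cmod (Cminus (Cmult (RtoC (v * a)) (Cpow z k)) (Cmult (RtoC a) (Cpow z k))) = (1 - v) * (a * Cmod z ^ k).
Proof. intros Hv Ha.
  replace (Cminus (Cmult (RtoC (v * a)) (Cpow z k)) (Cmult (RtoC a) (Cpow z k))) with (Cmult (RtoC ((v - 1) * a)) (Cpow z k)).
  rewrite Cmod_mult, Cmod_R, Cmod_pow. rewrite Rabs_mult, Rabs_left1 by lra. rewrite Rabs_pos_eq by lra. ring.
  rewrite !RtoC_mult, RtoC_minus. ring. Qed.

Lemma err_pos q x : 0 < q < 1 -> x <> RtoC 0 -> forall eps, 0 < eps -> exists N, forall n, (N <= n)%nat ->
  Cmod (Cminus (Pos q x n) (Ssum q x (S n))) <= eps.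
Proof.
  intros Hq Hx eps Heps.
  set (r := Cmod x). assert (Hr : 0 <= r) by apply Cmod_ge_0.
  set (c := fun j => q ^ cb (S j) * r ^ j).
  destruct (pow_small q (/ (2 * r + 1)) ltac:(lra)) as [J HJ].
  { apply Rinv_0_lt_compat. lra. }
  assert (Hc : forall j, 0 <= c j). { intros. unfold c. apply Rmult_le_pos; apply pow_le; lra. }
  assert (Hd : forall j, (J <= j)%nat -> c (S j) <= c j / 2).
  { intros j Hj. unfold c. change (cb (S (S j))) with (cb (S j) + S j)%nat. rewrite pow_add.
    change (r ^ S j) with (r * r ^ j).
    assert (q ^ S j <= q ^ J) by (apply pow_decr; lia || lra).
    specialize (HJ J (le_n J)).
    assert (q ^ S j * r <= 1/2).
    { assert (q ^ S j * r <= q ^ J * r) by (apply Rmult_le_compat_r; lra).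
      assert (q ^ J * r <= / (2 * r + 1) * r) by (apply Rmult_le_compat_r; lra).
      assert (/ (2 * r + 1) * r <= 1/2). { apply (Rmult_le_reg_r (2 * r + 1)). lra.
        replace (/ (2 * r + 1) * r * (2 * r + 1)) with r by (field; lra). lra. }
      lra. }
    assert (0 <= q ^ cb (S j) * r ^ j) by (apply Rmult_le_pos; apply pow_le; lra).
    nra. }
  destruct (tannery q (2 / (1 - q)) c J ltac:(lra) ltac:(apply Rlt_le, Rdiv_lt_0_compat; lra) Hc Hd eps Heps) as [N HN].
  exists N. intros n Hn.
  unfold Pos, Ssum. eapply Rle_trans. apply Cmod_csum_diff.
  eapply Rle_trans. 2:{ apply (HN n (S n) (fun j => 1 - V q n j)); auto.
    intros j Hj. destruct (V_bounds q n j Hq ltac:(lia)) as [[V0 V1] V2]. split; [lra|]. exact V2. }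
  right. apply rsum_ext. intros j Hj. destruct (V_bounds q n j Hq ltac:(lia)) as [[V0 V1] V2].
  rewrite Cmod_term_diff; auto. apply pow_le; lra.
Qed.

Lemma err_neg q x : 0 < q < 1 -> x <> RtoC 0 -> Cmod (Cinv x) <= 1/2 -> forall eps, 0 < eps -> exists N, forall n, (N <= n)%nat ->
  Cmod (Cminus (Neg q x n) (Gs q x n)) <= eps.
Proof.
  intros Hq Hx Hrho eps Heps.
  set (rho := Cmod (Cinv x)) in *. assert (Hr : 0 <= rho) by apply Cmod_ge_0.
  set (c := fun m => rho ^ S m).
  assert (Hc : forall j, 0 <= c j). { intros. unfold c. apply pow_le; lra. }
  assert (Hd : forall j, (0 <= j)%nat -> c (S j) <= c j / 2).
  { intros j _. unfold c. change (rho ^ S (S j)) with (rho * rho ^ S j).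
    assert (0 <= rho ^ S j) by (apply pow_le; lra). nra. }
  destruct (tannery q (2 / (1 - q) / q) c 0 ltac:(lra) ltac:(apply Rlt_le, Rdiv_lt_0_compat; [apply Rdiv_lt_0_compat|]; lra) Hc Hd eps Heps) as [N HN].
  exists N. intros n Hn.
  unfold Neg, Gs. eapply Rle_trans. apply Cmod_csum_diff.
  eapply Rle_trans. 2:{ apply (HN n n (fun m => 1 - V q n (S m))); auto.
    intros j Hj. destruct (V_bounds q n (S j) Hq ltac:(lia)) as [[V0 V1] V2]. split; [lra|].
    eapply Rle_trans. exact V2.
    replace (q ^ (n - j)) with (q * q ^ (n - S j)) by (replace (n - j)%nat with (S (n - S j)) by lia; reflexivity).
    right. field. lra. }
  apply rsum_le. intros j Hj. destruct (V_bounds q n (S j) Hq ltac:(lia)) as [[V0 V1] V2].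
  rewrite Cmod_term_diff; auto. 2:{ apply pow_le; lra. } fold rho. unfold c.
  apply Rmult_le_compat_l. lra.
  assert (q ^ cb (S j) <= 1) by (apply pow_le1; lra).
  assert (0 <= rho ^ S j) by (apply pow_le; lra). nra.
Qed.


Lemma tri' (a b : C) : Cmod a <= Cmod b + Cmod (Cminus b a).
Proof. replace a with (Cplus b (Copp (Cminus b a))) at 1 by ring.
  eapply Rle_trans. apply Cmod_triangle. rewrite Cmod_opp. lra. Qed.

Lemma fin (rho w : R) : 1/9 <= rho^2 <= 2/9 -> 0 < rho -> 212/100 <= w -> rho*w - rho^2/(1-rho) > 48/125.
Proof. intros [A B] C D.
  assert (rho < 1) by nra. assert (rho >= 1/3) by nra. assert (rho <= 48/100) by nra.
  assert (0 < 1 - rho) by lra.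
  apply Rlt_0_minus.
  replace (rho * w - rho ^ 2 / (1 - rho) - 48/125) with ((rho*w*(1-rho) - rho^2 - 48/125*(1-rho))/(1-rho)) by (field; lra).
  apply Rdiv_lt_0_compat; [|lra]. nra.
Qed.

Lemma LB_G q t n : 3/4 <= q < 1 -> 0 <= t -> t^2 <= 9/2 -> (2 <= n)%nat ->
  Cmod (Cinv (xx t)) < 1 ->
  Cmod (Cinv (xx t)) ^ 2 * w - Cmod (Cinv (xx t)) ^ 3 / (1 - Cmod (Cinv (xx t))) <= Cmod (Gs q (xx t) n).
Proof.
  intros Hq Ht0 Ht2 Hn Hrho.
  pose proof (xx_nz t) as Hx.
  set (x := xx t) in *. set (rho := Cmod (Cinv x)) in *.
  assert (H0 : 0 <= rho) by apply Cmod_ge_0.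
  unfold Gs. replace n with (2 + (n - 2))%nat by lia. rewrite csum_add.
  set (p := (n - 2)%nat).
  assert (E2 : csum (fun m => Cmult (RtoC (q ^ cb (S m))) (Cpow (Cinv x) (S m))) 2
             = Cmult (Cmult (Cinv x) (Cinv x)) (Cplus x (RtoC q))).
  { simpl. rewrite Rmult_1_r. field. auto. }
  rewrite E2.
  assert (Hxq : w <= Cmod (Cplus x (RtoC q))).
  { pose proof (modxs t q) as M. fold x in M. pose proof (Cmod_ge_0 (Cplus x (RtoC q))).
    pose proof w_pos. assert (w^2 <= Cmod (Cplus x (RtoC q))^2) by (rewrite M; pose proof (pow2_ge_0 (q - t)); lra). nra. }
  assert (Htail : Cmod (csum (fun i => Cmult (RtoC (q ^ cb (S (2 + i)))) (Cpow (Cinv x) (S (2 + i)))) p) <= rho ^ 3 / (1 - rho)).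
  { eapply Rle_trans. apply Cmod_csum.
    apply Rle_trans with (rsum (fun i => rho ^ 3 * rho ^ i) p).
    apply rsum_le. intros i Hi. rewrite Cmod_mult, Cmod_R, Cmod_pow. fold rho.
      rewrite Rabs_pos_eq by (apply pow_le; lra).
      replace (S (2 + i)) with (3 + i)%nat by lia. rewrite pow_add.
      assert (q ^ cb (3 + i) <= 1) by (apply pow_le1; lra).
      assert (0 <= rho ^ 3 * rho ^ i) by (apply Rmult_le_pos; apply pow_le; lra). nra.
    rewrite rsum_scal. unfold Rdiv. apply Rmult_le_compat_l. apply pow_le; lra. apply geom_le; lra. }
  pose proof (tri' (Cmult (Cmult (Cinv x) (Cinv x)) (Cplus x (RtoC q)))
                   (Cplus (Cmult (Cmult (Cinv x) (Cinv x)) (Cplus x (RtoC q))) (csum (fun i => Cmult (RtoC (q ^ cb (S (2 + i)))) (Cpow (Cinv x) (S (2 + i)))) p))) as T.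
  replace (Cminus (Cplus (Cmult (Cmult (Cinv x) (Cinv x)) (Cplus x (RtoC q))) (csum (fun i => Cmult (RtoC (q ^ cb (S (2 + i)))) (Cpow (Cinv x) (S (2 + i)))) p)) (Cmult (Cmult (Cinv x) (Cinv x)) (Cplus x (RtoC q))))
    with (csum (fun i => Cmult (RtoC (q ^ cb (S (2 + i)))) (Cpow (Cinv x) (S (2 + i)))) p) in T by ring.
  rewrite !Cmod_mult in T. fold rho in T.
  assert (rho * rho * w <= rho * rho * Cmod (Cplus x (RtoC q))) by (apply Rmult_le_compat_l; nra).
  replace (rho ^ 2 * w) with (rho * rho * w) by ring. lra.
Qed.


Lemma cb_div j : (j * (j + 1) / 2)%nat = cb (S j).
Proof. pose proof (cb_2 (S j)). replace (j * (j + 1))%nat with (cb (S j) * 2)%nat by nia.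
  apply Nat.div_mul. lia. Qed.

Lemma tt_eq q x j : theta_term q x j = Cmult (RtoC (q ^ cb (S j))) (Cpow x j).
Proof. unfold theta_term. rewrite cb_div. reflexivity. Qed.

Lemma Rabs_fst_le z : Rabs (fst z) <= Cmod z.
Proof. pose proof (Cmod_sq z). pose proof (Cmod_ge_0 z). pose proof (pow2_ge_0 (snd z)).
  apply Rsqr_incr_0_var. rewrite <- Rsqr_abs. unfold Rsqr. nra. auto. Qed.
Lemma Rabs_snd_le z : Rabs (snd z) <= Cmod z.
Proof. pose proof (Cmod_sq z). pose proof (Cmod_ge_0 z). pose proof (pow2_ge_0 (fst z)).
  apply Rsqr_incr_0_var. rewrite <- Rsqr_abs. unfold Rsqr. nra. auto. Qed.
Lemma Cmod_le_sum z : Cmod z <= Rabs (fst z) + Rabs (snd z).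
Proof. pose proof (Cmod_sq z). pose proof (Cmod_ge_0 z).
  pose proof (Rabs_pos (fst z)). pose proof (Rabs_pos (snd z)).
  assert (fst z ^ 2 = Rabs (fst z) ^ 2) by (simpl; rewrite !Rmult_1_r; rewrite <- Rabs_mult, Rabs_pos_eq; [auto| apply Rle_0_sqr]).
  assert (snd z ^ 2 = Rabs (snd z) ^ 2) by (simpl; rewrite !Rmult_1_r; rewrite <- Rabs_mult, Rabs_pos_eq; [auto| apply Rle_0_sqr]).
  nra. Qed.

Lemma decay_c q r : 0 < q < 1 -> 0 <= r -> exists J, forall j, (J <= j)%nat ->
  q ^ cb (S (S j)) * r ^ (S j) <= q ^ cb (S j) * r ^ j / 2.
Proof.
  intros Hq Hr.
  destruct (pow_small q (/ (2 * r + 1)) ltac:(lra)) as [J HJ].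
  { apply Rinv_0_lt_compat. lra. }
  exists J. intros j Hj. change (cb (S (S j))) with (cb (S j) + S j)%nat. rewrite pow_add.
    change (r ^ S j) with (r * r ^ j).
    assert (q ^ S j <= q ^ J) by (apply pow_decr; lia || lra).
    specialize (HJ J (le_n J)).
    assert (q ^ S j * r <= 1/2).
    { assert (q ^ S j * r <= q ^ J * r) by (apply Rmult_le_compat_r; lra).
      assert (q ^ J * r <= / (2 * r + 1) * r) by (apply Rmult_le_compat_r; lra).
      assert (/ (2 * r + 1) * r <= 1/2). { apply (Rmult_le_reg_r (2 * r + 1)). lra.
        replace (/ (2 * r + 1) * r * (2 * r + 1)) with r by (field; lra). lra. }
      lra. }
    assert (0 <= q ^ cb (S j) * r ^ j) by (apply Rmult_le_pos; apply pow_le; lra).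
    nra.
Qed.

Lemma ex_series_c q r : 0 < q < 1 -> 0 <= r -> ex_series (fun j => q ^ cb (S j) * r ^ j).
Proof.
  intros Hq Hr. destruct (decay_c q r Hq Hr) as [J HJ].
  set (c := fun j => q ^ cb (S j) * r ^ j).
  assert (Hc : forall j, 0 <= c j) by (intros; unfold c; apply Rmult_le_pos; apply pow_le; lra).
  pose proof (decay c J Hc HJ) as Dk.
  apply (ex_series_incr_n c J).
  apply (@ex_series_le R_AbsRing R_CompleteNormedModule _ (fun k => c J * (1/2) ^ k)).
  - intros k. change norm with Rabs. simpl. rewrite Rabs_pos_eq by apply Hc. apply Dk.
  - apply (ex_series_ext (fun k => scal (c J) ((1/2) ^ k))). intros; reflexivity.
    apply (@ex_series_scal_l R_AbsRing R_NormedModule). apply ex_series_geom. rewrite Rabs_pos_eq; lra.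
Qed.


Lemma sum_n_fst q x n : sum_n (fun j => Re (theta_term q x j)) n = fst (Ssum q x (S n)).
Proof. induction n.
  - rewrite sum_O. unfold Ssum. rewrite tt_eq. simpl. unfold Re. simpl. ring.
  - rewrite sum_Sn, IHn. unfold Ssum. change (csum ?f (S (S n))) with (Cplus (csum f (S n)) (f (S n))).
    rewrite tt_eq. unfold Re. simpl. reflexivity.
Qed.
Lemma sum_n_snd q x n : sum_n (fun j => Im (theta_term q x j)) n = snd (Ssum q x (S n)).
Proof. induction n.
  - rewrite sum_O. unfold Ssum. rewrite tt_eq. simpl. unfold Im. simpl. ring.
  - rewrite sum_Sn, IHn. unfold Ssum. change (csum ?f (S (S n))) with (Cplus (csum f (S n)) (f (S n))).
    rewrite tt_eq. unfold Im. simpl. reflexivity.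
Qed.

Lemma Cmod_tt q x j : 0 < q -> Cmod (theta_term q x j) = q ^ cb (S j) * Cmod x ^ j.
Proof. intros Hq. rewrite tt_eq, Cmod_mult, Cmod_R, Cmod_pow, Rabs_pos_eq. auto. apply pow_le; lra. Qed.

Lemma ex_fre q x : 0 < q < 1 -> ex_series (fun j => Re (theta_term q x j)).
Proof. intros Hq. apply (@ex_series_le R_AbsRing R_CompleteNormedModule _ (fun j => q ^ cb (S j) * Cmod x ^ j)).
  intros j. change norm with Rabs. rewrite <- Cmod_tt by lra. apply Rabs_fst_le.
  apply ex_series_c; auto. apply Cmod_ge_0. Qed.
Lemma ex_fim q x : 0 < q < 1 -> ex_series (fun j => Im (theta_term q x j)).
Proof. intros Hq. apply (@ex_series_le R_AbsRing R_CompleteNormedModule _ (fun j => q ^ cb (S j) * Cmod x ^ j)).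
  intros j. change norm with Rabs. rewrite <- Cmod_tt by lra. apply Rabs_snd_le.
  apply ex_series_c; auto. apply Cmod_ge_0. Qed.

Theorem lemma8 (q t : R) :
  3 / 4 <= q < 1 -> 0 <= t <= w ->
  theta q ((- t)%R, w) <> RtoC 0.
Proof.
  intros Hq Ht HT.
  change ((-t)%R, w) with (xx t) in HT.
  pose proof w_sq as Hw2. pose proof w_pos as Hw0. pose proof w_bnd as Hwb.
  assert (Ht2 : t^2 <= 9/2) by nra.
  pose proof (xx_nz t) as Hx.
  assert (Hq' : 0 < q < 1) by lra.
  pose proof (modx t) as Hr2.
  pose proof (mod1us t (q ^ 0)) as HB0.
  pose proof (modxs t (q ^ 0)) as HB1.
  pose proof (UB q t) as HUB.
  pose proof (LB_G q t) as HLB.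
  set (x := xx t) in *.
  set (r := Cmod x) in *.
  assert (Hr0 : 0 < r) by (apply Cmod_gt_0; auto).
  set (rho := Cmod (Cinv x)) in *.
  assert (Hrho : rho * r = 1) by (unfold rho; rewrite Cmod_inv by auto; fold r; field; lra).
  assert (Hrho0 : 0 < rho) by (pose proof (Cmod_ge_0 (Cinv x)); fold rho in H; nra).
  assert (Hrho2 : 1/9 <= rho^2 <= 2/9).
  { assert (E : rho^2 * r^2 = 1) by (replace (rho^2 * r^2) with ((rho*r)^2) by ring; rewrite Hrho; ring).
    assert (9/2 <= r^2 <= 9) by (rewrite Hr2; nra).
    assert (0 <= rho^2) by apply pow2_ge_0.
    assert (rho^2 * (9 - r^2) >= 0) by (apply Rle_ge, Rmult_le_pos; lra).
    assert (rho^2 * (r^2 - 9/2) >= 0) by (apply Rle_ge, Rmult_le_pos; lra).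
    split; nra. }
  assert (Hrho1 : rho <= 1/2) by nra.
  assert (HB : Cmod (Cplus (RtoC 1) (Cmult (Cinv x) (RtoC (q ^ 0)))) <= rho * (12/5)).
  { rewrite HB0. rewrite pow_O in HB1 |- *.
    set (b := Cmod (Cplus x (RtoC 1))) in *.
    assert (0 <= b) by apply Cmod_ge_0.
    assert (b^2 <= 144/25).
    { rewrite HB1. assert (t^2 <= t * w) by nra. nra. }
    assert (b <= 12/5) by nra.
    unfold Rdiv. replace (/ r) with rho by (field_simplify_eq; [lra|lra]).
    nra. }
  set (D := rho^2 * w - rho^3/(1 - rho) - rho * (12/5) * (4/25)).
  assert (HD : 0 < D).
  { pose proof (fin rho w Hrho2 Hrho0 ltac:(lra)) as F.
    unfold D. replace (rho ^ 3 / (1 - rho)) with (rho * (rho^2 / (1 - rho))) by (field; lra).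
    assert (rho * (rho * w - rho ^ 2 / (1 - rho)) > rho * (48/125)) by (apply Rmult_lt_compat_l; lra).
    nra. }
  assert (HD4 : 0 < D / 4) by lra.
  destruct (err_pos q x Hq' Hx (D/4) HD4) as [N1 HN1].
  destruct (err_neg q x Hq' Hx ltac:(fold rho; lra) (D/4) HD4) as [N2 HN2].
  unfold theta in HT. injection HT as H1 H2.
  assert (L1 : is_lim_seq (sum_n (fun j => Re (theta_term q x j))) 0).
  { rewrite <- H1. apply (Series_correct _ (ex_fre q x Hq')). }
  assert (L2 : is_lim_seq (sum_n (fun j => Im (theta_term q x j))) 0).
  { rewrite <- H2. apply (Series_correct _ (ex_fim q x Hq')). }
  apply is_lim_seq_spec in L1. apply is_lim_seq_spec in L2.
  destruct (L1 (mkposreal (D/4) HD4)) as [N3 HN3].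
  destruct (L2 (mkposreal (D/4) HD4)) as [N4 HN4].
  set (n := (N1 + N2 + N3 + N4 + 13)%nat).
  specialize (HN1 n ltac:(unfold n; lia)). specialize (HN2 n ltac:(unfold n; lia)).
  specialize (HN3 n ltac:(unfold n; lia)). specialize (HN4 n ltac:(unfold n; lia)).
  pose proof (sum_n_fst q x n) as E3. pose proof (sum_n_snd q x n) as E4.
  assert (HN3' : Rabs (fst (Ssum q x (S n))) < D/4).
  { rewrite <- E3, <- (Rminus_0_r (sum_n _ n)). exact HN3. }
  assert (HN4' : Rabs (snd (Ssum q x (S n))) < D/4).
  { rewrite <- E4, <- (Rminus_0_r (sum_n _ n)). exact HN4. }
  pose proof (Cmod_le_sum (Ssum q x (S n))) as HS.
  specialize (HUB n Hq (proj1 Ht) Ht2 ltac:(unfold n; lia)).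
  specialize (HLB n Hq (proj1 Ht) Ht2 ltac:(unfold n; lia) ltac:(fold rho; lra)). fold x rho in HLB.
  pose proof (main_identity q x Hq' Hx n) as MI.
  pose proof (tri' (Gs q x n) (Neg q x n)) as T1.
  pose proof (tri' (Neg q x n) (Pn q x n)) as T2.
  replace (Cminus (Pn q x n) (Neg q x n)) with (Pos q x n) in T2 by (rewrite <- MI; ring).
  pose proof (tri' (Pos q x n) (Ssum q x (S n))) as T3.
  replace (Cminus (Ssum q x (S n)) (Pos q x n)) with (Copp (Cminus (Pos q x n) (Ssum q x (S n)))) in T3 by ring.
  rewrite Cmod_opp in T3.
  unfold D in *. lra.
Qed.
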